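(* Let $m\ge n$, $0\le r<n$, $A^1,\dots,A^l\in\mathbb{R}^{m\times n}$, $b\in\mathbb{R}^l$, and let $X\in\mathcal{L}\cap\mathcal{M}(r)$ of rank $s$ with SVD $X=U\Sigma V^\top$ as in the context. If Assumption 2 holds at $X$, then $$\mathrm{T}^B_{\mathcal{L}\cap\mathcal{M}_X(r)}(X)=\mathrm{T}_{\mathcal{L}}(X)\cap\mathrm{T}^B_{\mathcal{M}_X(r)}(X).$$
   Context: $\langle X,Y\rangle=\sum_{i,j}X_{ij}Y_{ij}$. $\mathcal{A}(X)=(\langle A^1,X\rangle,\dots,\langle A^l,X\rangle)^\top$, $\mathcal{L}=\{X:\mathcal{A}(X)=b\}$, $\mathrm{T}_\mathcal{L}(X)=\{\Xi:\langle A^i,\Xi\rangle=0,\ i=1,\dots,l\}$, $\mathcal{M}(r)=\{X:\operatorname{rank}(X)\le r\}$. SVD convention: $X=U\Sigma V^\top$ with $U$, $V$ orthogonal of sizes $m$, $n$, $\Sigma$ with diagonal $\sigma_1\ge\dots\ge\sigma_s>0$ followed by zeros, $\Gamma=\{1,\dots,s\}$; $U_J,V_J$ are column submatrices indexed by $J$. $\mathcal{J}=\{J\subseteq\{1,\dots,n\}:|J|=r,\ \Gamma\subseteq J\}$, $\mathcal{M}_X(J)=\{UBV_J^\top:B\in\mathbb{R}^{m\times r}\}$, $\mathcal{M}_X(r)=\bigcup_{J\in\mathcal{J}}\mathcal{M}_X(J)$. The Bouligand tangent cone $\mathrm{T}^B_\Omega(X)$ of a closed set $\Omega$ at $X\in\Omega$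 is the set of $\Xi$ for which there exist $X^k\in\Omega$, $X^k\to X$, $t_k\downarrow0$ with $(X^k-X)/t_k\to\Xi$. $R^i_X=U^\top A^iV_\Gamma$; Assumption 2 at $X$: $R^1_X,\dots,R^l_X$ are linearly independent. *)

(* Defs.v *)
From HB Require Import structures.
From mathcomp Require Import all_boot all_order all_algebra.
From mathcomp Require Import all_classical all_reals all_analysis.
Set Implicit Arguments. Unset Strict Implicit. Unset Printing Implicit Defensive.
Import Order.TTheory GRing.Theory Num.Theory.
Import numFieldNormedType.Exports.
Local Open Scope classical_set_scope.
Local Open Scope ring_scope.

Section Defs.
Variable R : realType.

Definition mxdot (m n : nat) (X Y : 'M[R]_(m, n)) : R :=
  \sum_(i < m) \sum_(j < n) X i j * Y i j.

Definition affL (m n l : nat) (A : 'I_l -> 'M[R]_(m, n)) (b : 'I_l -> R)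
  : set 'M[R]_(m, n) := [set X | forall i, mxdot (A i) X = b i].

Definition tangL (m n l : nat) (A : 'I_l -> 'M[R]_(m, n))
  : set 'M[R]_(m, n) := [set Xi | forall i, mxdot (A i) Xi = 0].

(* column submatrix V_J (columns indexed by J, in increasing order) *)
Definition colsub_set (k n : nat) (V : 'M[R]_(k, n)) (J : {set 'I_n})
  : 'M[R]_(k, #|J|) := \matrix_(i < k, c < #|J|) V i (enum_val c).

(* Gamma = {1,...,s} (0-based: indices < s) *)
Definition Gam (n s : nat) : {set 'I_n} := [set j : 'I_n | (j < s)%N].

Definition MXJ (m n : nat) (U : 'M[R]_m) (V : 'M[R]_n) (J : {set 'I_n})
  : set 'M[R]_(m, n) :=
  [set Y | exists B : 'M[R]_(m, #|J|), Y = U *m B *m (colsub_set V J)^T].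

Definition calJ (n r s : nat) : set {set 'I_n} :=
  [set J | #|J| = r /\ @Gam n s \subset J].

Definition MXr (m n r s : nat) (U : 'M[R]_m) (V : 'M[R]_n)
  : set 'M[R]_(m, n) :=
  [set Y | exists J : {set 'I_n}, @calJ n r s J /\ MXJ U V J Y].

Definition bouligand (m n : nat) (Omega : set 'M[R]_(m, n)) (X : 'M[R]_(m, n))
  : set 'M[R]_(m, n) :=
  [set Xi | exists (Xk : nat -> 'M[R]_(m, n)) (t : nat -> R),
     (forall k, Omega (Xk k)) /\ (forall k, 0 < t k) /\
     t @ \oo --> (0 : R) /\ Xk @ \oo --> X /\
     (fun k => (t k)^-1 *: (Xk k - X)) @ \oo --> Xi].

Definition RX (m n : nat) (U : 'M[R]_m) (V : 'M[R]_n) (s : nat)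
  (Ai : 'M[R]_(m, n)) : 'M[R]_(m, #|Gam n s|) :=
  U^T *m Ai *m colsub_set V (Gam n s).

Definition lin_indep (p q l : nat) (F : 'I_l -> 'M[R]_(p, q)) : Prop :=
  forall c : 'I_l -> R, \sum_(i < l) c i *: F i = 0 -> forall i, c i = 0.

End Defs.

(* Main.v *)
Require Import Defs.
From HB Require Import structures.
From mathcomp Require Import all_boot all_order all_algebra.
From mathcomp Require Import all_classical all_reals all_analysis.
Import Order.TTheory GRing.Theory Num.Theory.
Import numFieldNormedType.Exports.
Local Open Scope classical_set_scope.
Local Open Scope ring_scope.

Section Aux.
Set Implicit Arguments. Unset Strict Implicit.
Variable R : realType.

Lemma entry_cvg p q (Z : nat -> 'M[R]_(p, q)) (Xi : 'M[R]_(p, q)) i j :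
  Z @ \oo --> Xi -> (fun k => Z k i j) @ \oo --> Xi i j.
Proof.
move=> h.
exact: (cvg_comp _ _ h (@coord_continuous _ p q i j Xi)).
Qed.

Lemma lin_cvg p q (c : 'M[R]_(p, q)) (Z : nat -> 'M[R]_(p, q)) (Xi : 'M[R]_(p, q)) :
  Z @ \oo --> Xi -> (fun k => mxdot c (Z k)) @ \oo --> mxdot c Xi.
Proof.
move=> h; rewrite /mxdot.
apply: cvg_big => //; first exact: add_continuous.
move=> i _; apply: cvg_big => //; first exact: add_continuous.
move=> j _; apply: cvgMl_tmp; exact: entry_cvg.
Qed.

Lemma mulV_cvg p q (W : 'M[R]_q) (Z : nat -> 'M[R]_(p, q)) (Xi : 'M[R]_(p, q)) a j :
  Z @ \oo --> Xi -> (fun k => (Z k *m W) a j) @ \oo --> (Xi *m W) a j.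
Proof.
move=> h.
have -> : (fun k => (Z k *m W) a j) = (fun k => \sum_i Z k a i * W i j).
  by apply: funext => k; rewrite mxE.
rewrite mxE; apply: cvg_big => //; first exact: add_continuous.
move=> i _; apply: cvgMr_tmp; exact: entry_cvg.
Qed.

Lemma mxdotD p q (c Y Z : 'M[R]_(p, q)) : mxdot c (Y + Z) = mxdot c Y + mxdot c Z.
Proof.
rewrite /mxdot -big_split /=; apply: eq_bigr => i _.
rewrite -big_split /=; apply: eq_bigr => j _; by rewrite mxE mulrDr.
Qed.

Lemma mxdotZ p q (c Y : 'M[R]_(p, q)) (t : R) : mxdot c (t *: Y) = t * mxdot c Y.
Proof.
rewrite /mxdot mulr_sumr; apply: eq_bigr => i _.
rewrite mulr_sumr; apply: eq_bigr => j _; by rewrite mxE mulrCA.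
Qed.

Lemma mxdotN p q (c Y : 'M[R]_(p, q)) : mxdot c (- Y) = - mxdot c Y.
Proof. by rewrite -scaleN1r mxdotZ mulN1r. Qed.


Lemma colsub_mul p k n (Y : 'M[R]_(p, k)) (V : 'M[R]_(k, n)) (J : {set 'I_n}) :
  Y *m colsub_set V J = colsub_set (Y *m V) J.
Proof.
apply/matrixP => a c; rewrite !mxE; apply: eq_bigr => i _; by rewrite mxE.
Qed.

Lemma MXJ_zero m n (U : 'M[R]_m) (V : 'M[R]_n) (J : {set 'I_n}) (Y : 'M[R]_(m, n)) :
  V^T *m V = 1%:M -> MXJ U V J Y -> forall a j, j \notin J -> (Y *m V) a j = 0.
Proof.
move=> VV [B ->] a j jJ.
have W0 : forall c, ((colsub_set V J)^T *m V) c j = 0.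
  move=> c.
  have -> : ((colsub_set V J)^T *m V) c j = (V^T *m V) (enum_val c) j.
    by rewrite !mxE; apply: eq_bigr => k _; rewrite !mxE.
  rewrite VV mxE; case: eqP => // e.
  by have := enum_valP c; rewrite e (negbTE jJ).
rewrite -!mulmxA mxE big1 // => k _.
by rewrite mxE big1 ?mulr0 // => c _; rewrite W0 mulr0.
Qed.

Lemma MXJ_of m n (U : 'M[R]_m) (V : 'M[R]_n) (J : {set 'I_n}) (Y : 'M[R]_(m, n)) :
  U^T *m U = 1%:M -> V^T *m V = 1%:M ->
  (forall a j, j \notin J -> (Y *m V) a j = 0) -> MXJ U V J Y.
Proof.
move=> UU VV H; exists (U^T *m Y *m colsub_set V J).
have UU' := mulmx1C UU; have VV' := mulmx1C VV.
have E : Y *m colsub_set V J *m (colsub_set V J)^T = Y.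
  rewrite colsub_mul; apply/matrixP => a b.
  rewrite mxE.
  transitivity (\sum_(j in J) (Y *m V) a j * V b j).
    rewrite (big_enum_val (fun j => (Y *m V) a j * V b j)).
    by apply: eq_bigr => c _; rewrite !mxE.
  rewrite big_mkcond /=.
  rewrite -[in RHS](mulmx1 Y) -VV' mulmxA mxE.
  apply: eq_bigr => j _; rewrite [(V^T) j b]mxE.
  by case: ifP => // /negbT jn; rewrite H // mul0r.
by rewrite !mulmxA UU' mul1mx E.
Qed.

End Aux.

Theorem lemma3p3 (R : realType) (m n r l s : nat)
  (A : 'I_l -> 'M[R]_(m, n)) (b : 'I_l -> R) (X : 'M[R]_(m, n))
  (U : 'M[R]_m) (V : 'M[R]_n) (Sigma : 'M[R]_(m, n)) (sigma : nat -> R) :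
  (n <= m)%N -> (r < n)%N ->
  affL A b X -> (\rank X <= r)%N -> \rank X = s ->
  U^T *m U = 1%:M -> V^T *m V = 1%:M ->
  Sigma = \matrix_(i < m, j < n) (if (i : nat) == j then sigma i else 0) ->
  (forall i j, (i <= j)%N -> (j < s)%N -> sigma j <= sigma i) ->
  (forall i, (i < s)%N -> 0 < sigma i) ->
  (forall i, (s <= i)%N -> sigma i = 0) ->
  X = U *m Sigma *m V^T ->
  lin_indep (fun i => RX U V s (A i)) ->
  bouligand (affL A b `&` MXr r s U V) X
  = tangL A `&` bouligand (MXr r s U V) X.
Proof.
move=> hnm hrn hXL hrk hs UU VV hSig hsdec hspos hs0 hX hind.
have XV0 : forall a (j : 'I_n), (s <= j)%N -> (X *m V) a j = 0.
  move=> a j sj; rewrite hX -mulmxA VV mulmx1 mxE big1 // => k _.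
  by rewrite hSig mxE; case: eqP => [->|_] /=; rewrite ?hs0 ?mulr0.
have XJ : forall J a j, calJ r s J -> j \notin J -> (X *m V) a j = 0.
  move=> J a j [_ hG] jJ; apply: XV0; rewrite leqNgt; apply/negP => js.
  apply: (negP jJ); move/fintype.subsetP: hG => hG; apply: hG; by rewrite /Gam inE.
apply/seteqP; split => Xi.
- case=> Xk [t [HO [Ht [Ht0 [HXk HXi]]]]]; split.
  + move=> i; have Hc := lin_cvg (c:=A i) HXi.
    have E : (fun k => mxdot (A i) ((t k)^-1 *: (Xk k - X))) = fun=> 0.
      apply: funext => k; have [h1 _] := HO k.
      by rewrite mxdotZ mxdotD mxdotN (h1 i) (hXL i) subrr mulr0.
    rewrite E in Hc; exact: (cvg_unique _ Hc (cvg_cst 0)).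
  + exists Xk, t; do !split => // k; by case: (HO k).
- move=> [HL [Yk [t [HO [Ht [Ht0 [HY HXi]]]]]]].
  have [J [HJ HXiJ]] : exists J, calJ r s J /\
      forall a j, j \notin J -> (Xi *m V) a j = 0.
    apply: contrapT => Hno.
    pose Z k := (t k)^-1 *: (Yk k - X).
    have ev : \forall k \near \oo, forall J : {set 'I_n}, calJ r s J ->
        exists a j, j \notin J /\ (Z k *m V) a j != 0.
      apply: filter_forall => J.
      have [HJ|HJ] := pselect (calJ r s J); last by apply: nearW => k /HJ.
      have [a [j [jJ hne]]] : exists a j, j \notin J /\ (Xi *m V) a j != 0.
        apply: contrapT => H2; apply: Hno; exists J; split => // a j jJ.
        apply: contrapT => h3; apply: H2; exists a, j; split => //; exact/eqP.
      have := cvgr_neq0 _ (mulV_cvg (W:=V) (a:=a) (j:=j) HXi) hne.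
      move=> H; near=> k => _; exists a, j; split => //.
      near: k; exact: H.
    have [k Hk] := filter_ex ev.
    have [J [HJ HM]] := HO k.
    have [a [j [jJ hne]]] := Hk J HJ.
    apply: (negP hne).
    rewrite /Z -scalemxAl mulmxBl.
    have -> : ((t k)^-1 *: (Yk k *m V - X *m V)) a j
        = (t k)^-1 * ((Yk k *m V) a j - (X *m V) a j) by rewrite !mxE.
    by rewrite (MXJ_zero VV HM a jJ) (XJ J a j HJ jJ) subrr mulr0.
  exists (fun k => X + t k *: Xi), t; split; [|split;[|split;[|split]]].
  + move=> k; split.
    * by move=> i; rewrite mxdotD mxdotZ hXL HL mulr0 addr0.
    * exists J; split => //; apply: MXJ_of => // a j jJ.
      rewrite mulmxDl -scalemxAl.
      have -> : (X *m V + t k *: (Xi *m V)) a j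
          = (X *m V) a j + t k * (Xi *m V) a j by rewrite !mxE.
      by rewrite HXiJ // (XJ J a j HJ jJ) mulr0 addr0.
  + exact: Ht.
  + exact: Ht0.
  + have h : (fun k => X + t k *: Xi) @ \oo --> X + 0 *: Xi.
      apply: (@cvgD _ _ _ _ _ (fun=> X) (fun k => t k *: Xi)).
        exact: cvg_cst.
      exact: cvgZr_tmp.
    by rewrite scale0r addr0 in h.
  + have -> : (fun k => (t k)^-1 *: (X + t k *: Xi - X)) = fun=> Xi.
      apply: funext => k; rewrite addrAC subrr add0r scalerA mulVf ?scale1r //.
      by rewrite gt_eqF.
    exact: cvg_cst.
Unshelve. all: by end_near.
Qed.
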